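(* The set $\{A/B : A,B\in\mathtt{APAL}\}$ is dense in the positive real numbers $\mathbb{R}^{+}$.
   Context: A positive integer $n$ is antipalindromic if its binary representation $w=w_1w_2\cdots w_L$ (most significant digit first, no leading zeros) has even length $L$ and the second half is the reverse of the bitwise complement of the first half, i.e. $w_i+w_{L+1-i}=1$ for all $i$. For example $52=(110100)_2$ is antipalindromic. $\mathtt{APAL}=\{2,10,12,38,42,52,56,\dots\}$ denotes the set of antipalindromic numbers. *)

(* Defs.v *)
From Stdlib Require Import Reals Arith.

Definition binlen (n : nat) : nat := S (Nat.log2 n).

(* Binary digit w_i (1-based, most significant first) of n with L = binlen n:
   w_i = bit of weight 2^(L - i). *)
Definition bdigit (n i : nat) : nat := if Nat.testbit n (binlen n - i) then 1 else 0.

Definition antipalindromic (n : nat) : Prop :=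
  0 < n /\ Nat.Even (binlen n) /\
  forall i, 1 <= i <= binlen n -> bdigit n i + bdigit n (binlen n + 1 - i) = 1.

(* Main.v *)
Require Import Defs.
From Stdlib Require Import Reals.
From Stdlib Require Import Arith Lia Lra List.
Import ListNotations.

Fixpoint ofbits (l : list bool) : nat :=
  match l with nil => 0 | b :: l => 2 * ofbits l + Nat.b2n b end.

Lemma testbit_ofbits : forall l i, Nat.testbit (ofbits l) i = nth i l false.
Proof.
  induction l as [|b l IH]; intros i; simpl ofbits.
  - rewrite Nat.bits_0; destruct i; reflexivity.
  - destruct i. + apply Nat.testbit_0_r. + change (Nat.testbit (2 * ofbits l + Nat.b2n b) (S i) = nth i l false). rewrite Nat.testbit_succ_r. apply IH.
Qed.

Lemma ofbits_lt : forall l, ofbits l < 2 ^ length l.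
Proof.
  induction l as [|b l IH]; simpl; [lia|]. destruct b; simpl; lia.
Qed.

Lemma ofbits_app : forall l1 l2, ofbits (l1 ++ l2) = ofbits l1 + 2 ^ length l1 * ofbits l2.
Proof.
  induction l1 as [|b l IH]; intros l2; simpl; [lia|]. rewrite IH. lia.
Qed.

Lemma tobits : forall m t, t < 2 ^ m -> exists l, length l = m /\ ofbits l = t.
Proof.
  induction m as [|m IH]; intros t Ht.
  - exists []. simpl in *. split; [reflexivity|lia].
  - destruct (IH (Nat.div2 t)) as [l [H1 H2]].
    + pose proof (Nat.div2_odd t). simpl in Ht. destruct (Nat.odd t); simpl in *; lia.
    + exists (Nat.odd t :: l). simpl. split; [lia|]. rewrite H2. symmetry. apply Nat.div2_odd.
Qed.

Lemma mirror : forall h k, length h = k ->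
  let l := map negb (rev h) ++ h in
  forall j, j < 2 * k -> nth j l false = negb (nth (2 * k - 1 - j) l false).
Proof.
  intros h k Hk l j Hj. unfold l.
  assert (Hr : length (map negb (rev h)) = k) by (rewrite length_map, length_rev; auto).
  destruct (Nat.lt_ge_cases j k) as [H|H].
  - rewrite app_nth1 by lia. rewrite app_nth2 by lia. rewrite Hr.
    change false with (negb true). rewrite map_nth. rewrite rev_nth by lia.
    rewrite Hk. rewrite nth_indep with (d := true) (d' := false) by lia.
    replace (k - S j) with (2 * k - 1 - j - k) by lia. reflexivity.
  - rewrite app_nth2 by lia. rewrite app_nth1 by lia. rewrite Hr.
    change false with (negb true) at 2. rewrite map_nth. rewrite rev_nth by lia.
    rewrite Hk. rewrite nth_indep with (d := true) (d' := false) by lia.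
    replace (k - S (2 * k - 1 - j)) with (j - k) by lia. destruct (nth (j-k) h false); reflexivity.
Qed.

Lemma core : forall k u, 1 <= k -> 2 ^ (k - 1) <= u < 2 ^ k ->
  exists A, antipalindromic A /\ u * 2 ^ k <= A < (u + 1) * 2 ^ k.
Proof.
  intros k u Hk Hu. destruct k as [|k']; [lia|]. simpl in Hu. rewrite Nat.sub_0_r in Hu.
  destruct (tobits k' (u - 2 ^ k')) as [h0 [Hl Ho]]. { simpl in Hu. lia. }
  set (h := h0 ++ [true]).
  assert (Hh : length h = S k') by (unfold h; rewrite length_app; simpl; lia).
  assert (Hoh : ofbits h = u).
  { unfold h. rewrite ofbits_app. simpl. rewrite Hl, Ho. simpl in Hu. lia. }
  set (l := map negb (rev h) ++ h).
  assert (Hr : length (map negb (rev h)) = S k') by (rewrite length_map, length_rev; auto).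
  assert (HA : ofbits l = ofbits (map negb (rev h)) + 2 ^ S k' * u).
  { unfold l. rewrite ofbits_app, Hr, Hoh. reflexivity. }
  pose proof (ofbits_lt (map negb (rev h))) as Hlt. rewrite Hr in Hlt.
  exists (ofbits l). 
  assert (Hbl : binlen (ofbits l) = 2 * S k').
  { unfold binlen. f_equal.
    assert (Nat.log2 (ofbits l) = 2 * S k' - 1); [|lia].
    apply Nat.log2_unique; [lia|]. replace (S (2 * S k' - 1)) with (S k' + S k') by lia.
    rewrite Nat.pow_add_r. replace (2 * S k' - 1) with (k' + S k') by lia.
    rewrite Nat.pow_add_r. rewrite HA. simpl in Hu. simpl. simpl in Hlt. nia. }
  split; [|rewrite HA; lia].
  split; [rewrite HA; simpl; nia|]. split.
  - rewrite Hbl. exists (S k'). lia.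
  - intros i Hi. rewrite Hbl in *. unfold bdigit. rewrite Hbl. rewrite !testbit_ofbits.
    replace (2 * S k' - (2 * S k' + 1 - i)) with (i - 1) by lia.
    pose proof (mirror h (S k') Hh (i - 1)) as M. cbv zeta in M. fold l in M.
    rewrite M by lia.
    replace (2 * S k' - 1 - (i - 1)) with (2 * S k' - i) by lia.
    destruct (nth (2 * S k' - i) l false); reflexivity.
Qed.
Open Scope R_scope.

Lemma nat_floor : forall r, 0 <= r -> exists v : nat, INR v <= r < INR v + 1.
Proof.
  intros r Hr. destruct (INR_unbounded r) as [N HN].
  induction N as [|N IH].
  - simpl in HN. lra.
  - destruct (Rlt_or_le r (INR N)) as [H|H].
    + apply IH; lra.
    + exists N. rewrite S_INR in HN. lra.
Qed.

Lemma pow2_ge : forall n, INR n <= 2 ^ n.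
Proof.
  induction n as [|n IH]; [simpl; lra|]. rewrite S_INR; simpl.
  assert (1 <= 2 ^ n) by (apply pow_R1_Rle; lra). lra.
Qed.

Lemma log4 : forall z, 1 <= z -> exists n, (2 ^ n) * (2 ^ n) <= z < (2 * 2 ^ n) * (2 * 2 ^ n).
Proof.
  intros z Hz. destruct (INR_unbounded z) as [N HN].
  assert (HN' : z < 2 ^ N * 2 ^ N).
  { pose proof (pow2_ge N). assert (1 <= 2 ^ N) by (apply pow_R1_Rle; lra). nra. }
  clear HN. induction N as [|N IH].
  - simpl in HN'. lra.
  - destruct (Rlt_or_le z (2 ^ N * 2 ^ N)) as [H|H].
    + apply IH; lra.
    + exists N. simpl in HN'. lra.
Qed.

Lemma G : forall (k : nat) a b, (1 <= k)%nat ->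
  Rmax a ((2 ^ k) * (2 ^ k) / 2) + 2 * 2 ^ k < Rmin b ((2 ^ k) * (2 ^ k)) ->
  exists A, antipalindromic A /\ a < INR A < b.
Proof.
  intros k a b Hk H. set (Q := 2 ^ k) in *.
  assert (HQ : 0 < Q) by (apply pow_lt; lra).
  set (a' := Rmax a (Q * Q / 2)) in *.
  assert (Ha1 : a <= a') by apply Rmax_l.
  assert (Ha2 : Q * Q / 2 <= a') by apply Rmax_r.
  assert (Hb1 : Rmin b (Q * Q) <= b) by apply Rmin_l.
  assert (Hb2 : Rmin b (Q * Q) <= Q * Q) by apply Rmin_r.
  destruct (nat_floor (a' / Q)) as [v [Hv1 Hv2]].
  { unfold Rdiv. apply Rmult_le_pos; [nra|]. left; apply Rinv_0_lt_compat; lra. }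
  assert (Hv1' : INR v * Q <= a').
  { apply (Rmult_le_compat_r Q) in Hv1; [|lra]. field_simplify in Hv1; lra. }
  assert (Hv2' : a' < (INR v + 1) * Q).
  { apply (Rmult_lt_compat_r Q) in Hv2; [|lra]. field_simplify in Hv2; lra. }
  destruct k as [|k']; [lia|].
  assert (HQ' : Q = 2 * 2 ^ k') by reflexivity.
  destruct (core (S k') (S v)) as [A [HA [HA1 HA2]]]; [lia| |].
  - simpl. rewrite Nat.sub_0_r. split.
    + apply INR_le. rewrite S_INR, pow_INR. simpl INR.
      replace (1+1) with 2 by ring. 
      assert (Q / 2 < INR v + 1).
      { apply Rmult_lt_reg_r with Q; [lra|]. field_simplify; lra. }
      rewrite HQ' in H0. lra.
    + cut (S v < 2 ^ S k')%nat; [simpl; lia|].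
      apply INR_lt. rewrite S_INR, pow_INR. simpl INR.
      replace (1+1) with 2 by ring. fold Q.
      assert (INR v + 1 + 1 < Q).
      { apply Rmult_lt_reg_r with Q; [lra|]. nra. }
      lra.
  - exists A. split; [exact HA|].
    apply le_INR in HA1. apply lt_INR in HA2.
    rewrite mult_INR, pow_INR, S_INR in HA1. rewrite mult_INR, pow_INR, plus_INR, S_INR in HA2.
    simpl INR in HA1, HA2. replace (1+1) with 2 in HA1, HA2 by ring.
    fold Q in HA1, HA2. split; nra.
Qed.

Lemma mm : forall a b e f d, a + d < b -> a + d < e -> f + d < b -> f + d < e ->
  Rmax a f + d < Rmin b e.
Proof.
  intros. unfold Rmax, Rmin. destruct (Rle_dec a f); destruct (Rle_dec b e); lra.
Qed.

Theorem theorem12 : forall x y : R, 0 < x -> x < y ->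
  exists A B : nat, antipalindromic A /\ antipalindromic B /\
    x < INR A / INR B < y.
Proof.
  intros x y Hx Hxy.
  set (s := x / y).
  assert (Hy : 0 < y) by lra.
  assert (Hxs : x = s * y) by (unfold s; field; lra).
  assert (Hs0 : 0 < s) by (unfold s; apply Rdiv_lt_0_compat; lra).
  assert (Hs1 : s < 1) by (unfold s; apply Rmult_lt_reg_r with y; [lra|]; field_simplify; lra).
  set (eta := (1 - s) / 2).
  set (K := 1 + 4 * y * y / x).
  assert (HKx : K * x = x + 4 * y * y) by (unfold K; field; lra).
  assert (HK1 : 1 < K) by nra.
  set (T := (K + 4) / eta).
  assert (HT : T * eta = K + 4) by (unfold T, eta; field; lra).
  assert (HT2 : 2 < T) by (unfold eta in HT; nra).
  assert (suff : forall A B : nat, antipalindromic A -> antipalindromic B ->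
            0 < INR B -> x * INR B < INR A < y * INR B ->
            exists A B : nat, antipalindromic A /\ antipalindromic B /\ x < INR A / INR B < y).
  { intros A B HA HB HB0 [H1 H2]. exists A, B. split; [auto|split; [auto|]].
    split; [apply Rmult_lt_reg_r with (INR B); [lra|]; field_simplify; lra|].
    apply Rmult_lt_reg_r with (INR B); [lra|]; field_simplify; lra. }
  destruct (INR_unbounded (Rmax 2 (4 * T * T / x))) as [M HM].
  assert (HM1 : 2 < INR M) by (pose proof (Rmax_l 2 (4*T*T/x)); lra).
  assert (HM2 : 4 * T * T < x * INR M).
  { pose proof (Rmax_r 2 (4*T*T/x)).
    assert (4 * T * T / x < INR M) by lra.
    replace (4 * T * T) with ((4 * T * T / x) * x) by (field; lra). nra. }
  pose proof (pow2_ge M) as HPM.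
  set (P := 2 ^ M) in *.
  destruct M as [|m']; [simpl in HM1; lra|].
  assert (HPm : P = 2 * 2 ^ m') by reflexivity.
  assert (Hpm : (1 <= 2 ^ m')%nat) by (apply Nat.le_succ_l, Nat.neq_0_lt_0, Nat.pow_nonzero; lia).
  destruct (core (S m') (2 ^ S m' - 1)) as [B1 [HB1 [HB1a HB1b]]]; [lia| rewrite Nat.pow_succ_r'; replace (S m' - 1)%nat with m' by lia; lia|].
  destruct (core (S m') (2 ^ m')) as [B2 [HB2 [HB2a HB2b]]]; [lia| rewrite Nat.pow_succ_r'; replace (S m' - 1)%nat with m' by lia; lia|].
  rewrite Nat.pow_succ_r' in HB1a, HB1b, HB2a, HB2b.
  assert (HPw : P = 2 * INR (2 ^ m')) by (rewrite HPm, pow_INR; simpl INR; replace (1 + 1) with 2 by ring; reflexivity).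
  set (w := (2 ^ m')%nat) in *.
  assert (HB1a' : (2 * w * (2 * w) <= B1 + 2 * w)%nat) by nia.
  assert (HB1b' : (B1 <= 2 * w * (2 * w))%nat) by nia.
  assert (I2 : INR 2 = 2) by (simpl; ring).
  assert (HwP : INR w = P / 2) by (rewrite HPw; field).
  apply le_INR in HB1a'. rewrite plus_INR, !mult_INR, I2, HwP in HB1a'.
  apply le_INR in HB1b'. rewrite !mult_INR, I2, HwP in HB1b'.
  apply le_INR in HB2a. rewrite !mult_INR, I2, HwP in HB2a.
  apply lt_INR in HB2b. rewrite !mult_INR, plus_INR, I2, HwP in HB2b. simpl INR in HB2b.
  replace (2 * (P / 2)) with P in HB1a', HB1b', HB2a, HB2b by field.
  set (b1 := INR B1) in *. set (b2 := INR B2) in *.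
  set (z := x * P * P).
  assert (HP : 2 < P) by lra.
  assert (Hz : 4 * T * T <= z).
  { assert (x * INR (S m') <= x * P) by (apply Rmult_le_compat_l; lra).
    assert (x * P <= x * P * P) by nra. unfold z; lra. }
  destruct (log4 z) as [n [Hn1 Hn2]]; [nra|].
  set (Q := 2 ^ n) in *.
  assert (HQ0 : 0 < Q) by (apply pow_lt; lra).
  assert (HTQ : T < Q) by nra.
  assert (HyP : y * P < K * Q).
  { destruct (Rlt_or_le (y * P) (K * Q)) as [H|H]; [exact H|exfalso].
    assert (HKQ : 0 <= K * Q) by nra.
    assert ((K * Q) * (K * Q) <= (y * P) * (y * P)) by (apply Rmult_le_compat; lra).
    assert (x * (y * P) * (y * P) >= x * (K * Q) * (K * Q)) by nra.
    assert (x * (y * P) * (y * P) = y * y * z) by (unfold z; ring).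
    assert (x * (K * Q) * (K * Q) = K * (x + 4 * y * y) * Q * Q) by (rewrite <- HKx; ring).
    assert (y * y * z < y * y * (4 * Q * Q)) by (apply Rmult_lt_compat_l; nra).
    assert (K * (x + 4 * y * y) * Q * Q >= (x + 4 * y * y) * Q * Q).
    { assert (0 <= (x + 4 * y * y) * Q * Q) by nra. nra. }
    nra. }
  assert (Hkey : eta * Q * Q > y * P + 4 * Q).
  { assert (eta * Q > K + 4) by (unfold eta in *; nra). nra. }
  assert (Heta : 0 < eta < 1/2) by (unfold eta; lra).
  assert (HyPP : y * P * P >= z).
  { assert (0 <= (y - x) * (P * P)) by (apply Rmult_le_pos; nra). unfold z; nra. }
  assert (HsY : s * (y * P * P) = z) by (unfold z; rewrite Hxs; ring).
  assert (Hx1a : x * (P * P - P) <= x * b1).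
  { apply Rmult_le_compat_l; lra. }
  assert (Hx1b : x * b1 <= x * (P * P)) by (apply Rmult_le_compat_l; lra).
  assert (Hy1a : y * (P * P - P) <= y * b1) by (apply Rmult_le_compat_l; lra).
  assert (Hd1 : (y - x) * (P * P - P) <= (y - x) * b1) by (apply Rmult_le_compat_l; lra).
  assert (Hx2a : x * (P / 2 * P) <= x * b2) by (apply Rmult_le_compat_l; lra).
  assert (Hx2b : x * b2 <= x * ((P / 2 + 1) * P)) by (apply Rmult_le_compat_l; lra).
  assert (Hy2a : y * (P / 2 * P) <= y * b2) by (apply Rmult_le_compat_l; lra).
  assert (Hd2 : (y - x) * (P / 2 * P) <= (y - x) * b2) by (apply Rmult_le_compat_l; lra).
  assert (HxP : x * P <= y * P) by nra.
  assert (Hb2pos : 0 < b2) by nra.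
  assert (Hb1pos : 0 < b1) by nra.
  assert (Hs3 : s * (3 - s) <= 1 + s) by nra.
  set (Y := y * P * P) in *.
  assert (E1 : (y - x) * b1 = y * b1 - x * b1) by ring.
  assert (E2 : (y - x) * b2 = y * b2 - x * b2) by ring.
  assert (E3 : x * ((P / 2 + 1) * P) = z / 2 + x * P) by (unfold z; field).
  assert (E4 : x * (P / 2 * P) = z / 2) by (unfold z; field).
  assert (E5 : x * (P * P) = z) by (unfold z; ring).
  assert (E5' : x * (P * P - P) = z - x * P) by (unfold z; ring).
  assert (E6 : y * (P / 2 * P) = Y / 2) by (unfold Y; field).
  assert (E6' : y * (P * P - P) = Y - y * P) by (unfold Y; ring).
  assert (E7 : (y - x) * (P / 2 * P) = (1 - s) * Y / 2) by (unfold Y; rewrite Hxs; field).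
  assert (E7' : (y - x) * (P * P - P) = (1 - s) * Y - (y - x) * P) by (unfold Y; rewrite Hxs; ring).
  assert (HyxP : (y - x) * P <= y * P) by nra.
  set (QQ := Q * Q) in *.
  assert (Hk2 : eta * QQ > y * P + 4 * Q) by (unfold QQ; lra).
  assert (Ee : eta * QQ = QQ / 2 - s * QQ / 2) by (unfold eta; field).
  assert (HQQ : 0 < QQ) by (unfold QQ; nra).
  assert (HsQQ : 0 < s * QQ) by nra.
  assert (HQ4 : 4 * Q < QQ / 2) by (unfold eta in Heta; nra).
  assert (HYQ : (1 - s) * QQ <= (1 - s) * Y) by (apply Rmult_le_compat_l; lra).
  assert (HxPQ : 0 <= x * P) by nra.
  destruct (Rle_lt_dec z ((1 + s) * QQ)) as [C1|C1];
  [|destruct (Rle_lt_dec z (2 * (1 + s) * QQ)) as [C2|C2]].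
  -
    destruct n as [|n']; [simpl in HTQ; unfold Q in HTQ; simpl in HTQ; lra|].
    destruct (G (S n') (x * b2) (y * b2)) as [A [HA [HA1 HA2]]]; [lia| |].
    + fold Q. fold QQ. apply mm; lra.
    + apply (suff A B2); auto.
  -
    assert (HY : Y > (3 - s) * QQ).
    { assert (s * (3 - s) * QQ <= (1 + s) * QQ) by (apply Rmult_le_compat_r; lra).
      assert (s * Y > s * ((3 - s) * QQ)) by lra.
      apply Rmult_lt_reg_l in H0; lra. }
    assert (HYQ' : (1 - s) * QQ <= (1 - s) * Y) by (apply Rmult_le_compat_l; nra).
    destruct (G (S n) (x * b1) (y * b1)) as [A [HA [HA1 HA2]]]; [lia| |].
    + change (2 ^ S n) with (2 * 2 ^ n). fold Q.
      replace (2 * Q * (2 * Q) / 2) with (2 * QQ) by (unfold QQ; field).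
      replace (2 * Q * (2 * Q)) with (4 * QQ) by (unfold QQ; field).
      replace (2 * (2 * Q)) with (4 * Q) by ring.
      apply mm; lra.
    + apply (suff A B1); auto.
  -
    assert (HY : Y > 2 * (3 - s) * QQ).
    { assert (s * (3 - s) * QQ <= (1 + s) * QQ) by (apply Rmult_le_compat_r; lra).
      assert (s * Y > s * (2 * (3 - s) * QQ)) by lra.
      apply Rmult_lt_reg_l in H0; lra. }
    assert (Hn2' : z < 4 * QQ) by (unfold QQ; lra).
    assert (HYQ' : (1 - s) * (2 * QQ) <= (1 - s) * Y) by (apply Rmult_le_compat_l; nra).
    destruct (G (S n) (x * b2) (y * b2)) as [A [HA [HA1 HA2]]]; [lia| |].
    + change (2 ^ S n) with (2 * 2 ^ n). fold Q.
      replace (2 * Q * (2 * Q) / 2) with (2 * QQ) by (unfold QQ; field).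
      replace (2 * Q * (2 * Q)) with (4 * QQ) by (unfold QQ; field).
      replace (2 * (2 * Q)) with (4 * Q) by ring.
      apply mm; lra.
    + apply (suff A B2); auto.
Qed.
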